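(* Let $K$ be an algebraically closed field, $Q$ a quiver with vertex set $I$, $v\in I$ and $\lambda\in K^I$. Let $Q_\infty$ be the quiver obtained from $Q$ by adjoining a new vertex $\infty$ and a new arrow $a\colon\infty\to v$, and extend $\lambda$ to $K^{I\cup\{\infty\}}$ by $\lambda_\infty=0$. Let $S(\infty)$ be the simple $\Pi^\lambda Q_\infty$-module which is one-dimensional at $\infty$ and zero at all other vertices, and let $\mathcal C$ be the category of $\Pi^\lambda Q_\infty$-modules $X$ with $\operatorname{Hom}(X,S(\infty))=\operatorname{Hom}(S(\infty),X)=0$. Then the forgetful functor from representations of $\overline{Q_\infty}$ to representations of $\bar Q$ (forgetting the vertex $\infty$ and the arrows $a,a^*$) induces an equivalence from the full subcategory of finite-dimensional $X\in\mathcal C$ with $\dim X_\infty\le 1$ to the category of nearly representations of $\Pi^\lambda Q$ with respect to $v$.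
   Context: For a quiver $Q$ with vertex set $I$, each arrow $a$ has tail $t(a)$ and head $h(a)$. The double $\bar Q$ is obtained by adjoining an arrow $a^*\colon h(a)\to t(a)$ for each arrow $a$ of $Q$. For $\lambda\in K^I$ and a finite-dimensional representation $X$ of $\bar Q$ define, for each $i\in I$, $$X_{c,i}=\sum_{a\in Q,\,h(a)=i}X_aX_{a^*}-\sum_{a\in Q,\,t(a)=i}X_{a^*}X_a-\lambda_i 1_{X_i}.$$ The deformed preprojective algebra $\Pi^\lambda Q$ is $K\bar Q$ modulo the relation $\sum_{a\in Q}(aa^*-a^*a)-\sum_i\lambda_ie_i$; its modules are the representations $X$ of $\bar Q$ with $X_{c,i}=0$ for all $i$. Write $\lambda\cdot\alpha=\sum_i\lambda_i\alpha_i$. A nearly representation of $\Pi^\lambda Q$ (with respect to $v$) is a finite-dimensional representation $X$ of $\bar Q$ with $\lambda\cdot\underline{\dim}\,X=0$, $X_{c,i}=0$ for all $i\ne v$, and $\operatorname{rank}(X_{c,v})\le 1$; morphisms of nearly representations are morphisms of $\bar Q$-representations. *)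

(* Defs.v *)
From HB Require Import structures.
From mathcomp Require Import all_boot all_order all_algebra.
Set Implicit Arguments. Unset Strict Implicit. Unset Printing Implicit Defensive.
Import GRing.Theory.
Local Open Scope ring_scope.

Record quiver := Quiver {
  vertex : finType;
  arrow : finType;
  qtail : arrow -> vertex;
  qhead : arrow -> vertex }.

(* Q_infty: new vertex None (= infinity) and new arrow None : infinity -> v. *)
Definition quiver_inf (Q : quiver) (v : vertex Q) : quiver :=
  @Quiver (option (vertex Q) : finType) (option (arrow Q) : finType)
    (fun o => match o with None => None | Some a => Some (qtail a) end)
    (fun o => match o with None => Some v | Some a => Some (qhead a) end).

Definition lam_inf (K : fieldType) (Q : quiver) (lam : vertex Q -> K)
  : option (vertex Q) -> K :=
  fun o => match o with None => 0 | Some i => lam i end.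

(* Convention: spaces are K^(rdim i) as row vectors; the linear map of an
   arrow b : i -> j is a matrix of size rdim i x rdim j acting on the right.
   rA a represents X_a : X_(t a) -> X_(h a) and rS a represents
   X_{a star} : X_(h a) -> X_(t a). *)
Record drep (K : fieldType) (Q : quiver) := DRep {
  rdim : vertex Q -> nat;
  rA : forall a : arrow Q, 'M[K]_(rdim (qtail a), rdim (qhead a));
  rS : forall a : arrow Q, 'M[K]_(rdim (qhead a), rdim (qtail a)) }.

Definition mx_at (K : fieldType) (V : eqType) (d : V -> nat) (i j : V)
  (m : 'M[K]_(d j)) : 'M[K]_(d i) :=
  if j =P i is ReflectT e then castmx (f_equal d e, f_equal d e) m else 0.

(* X_{c,i} = sum_{h a = i} X_a X_{a star} - sum_{t a = i} X_{a star} X_a - lam_i 1.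
   With right action, X_a X_{a star} (first a star, then a) is rS a *m rA a. *)
Definition Xc (K : fieldType) (Q : quiver) (lam : vertex Q -> K)
  (X : drep K Q) (i : vertex Q) : 'M[K]_(rdim X i) :=
  \sum_(a : arrow Q) @mx_at K _ (rdim X) i _ (rS X a *m rA X a)
  - \sum_(a : arrow Q) @mx_at K _ (rdim X) i _ (rA X a *m rS X a)
  - (lam i)%:M.

Definition is_module (K : fieldType) (Q : quiver) (lam : vertex Q -> K)
  (X : drep K Q) : Prop := forall i, Xc lam X i = 0.

Definition is_hom (K : fieldType) (Q : quiver) (X Y : drep K Q)
  (f : forall i, 'M[K]_(rdim X i, rdim Y i)) : Prop :=
  forall a : arrow Q,
    rA X a *m f (qhead a) = f (qtail a) *m rA Y a /\
    rS X a *m f (qtail a) = f (qhead a) *m rS Y a.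

Definition is_iso (K : fieldType) (Q : quiver) (X Y : drep K Q) : Prop :=
  exists (f : forall i, 'M[K]_(rdim X i, rdim Y i))
         (g : forall i, 'M[K]_(rdim Y i, rdim X i)),
    [/\ is_hom f, is_hom g,
        forall i, f i *m g i = 1%:M & forall i, g i *m f i = 1%:M].

Definition lam_dot (K : fieldType) (Q : quiver) (lam : vertex Q -> K)
  (X : drep K Q) : K := \sum_(i : vertex Q) lam i * (rdim X i)%:R.

Definition nearly_rep (K : fieldType) (Q : quiver) (lam : vertex Q -> K)
  (v : vertex Q) (X : drep K Q) : Prop :=
  [/\ lam_dot lam X = 0,
      forall i, i != v -> Xc lam X i = 0 &
      (\rank (Xc lam X v) <= 1)%N].

Definition S_inf (K : fieldType) (Q : quiver) (v : vertex Q)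
  : drep K (quiver_inf v) :=
  @DRep K (quiver_inf v) (fun o => if o is None then 1%N else 0%N)
    (fun a => 0) (fun a => 0).

Definition in_C1 (K : fieldType) (Q : quiver) (v : vertex Q)
  (lam : vertex Q -> K) (X : drep K (quiver_inf v)) : Prop :=
  [/\ @is_module K (quiver_inf v) (lam_inf lam) X,
      (forall f, @is_hom K _ X (S_inf K v) f -> forall o, f o = 0),
      (forall f, @is_hom K _ (S_inf K v) X f -> forall o, f o = 0) &
      (rdim X None <= 1)%N].

Definition forget (K : fieldType) (Q : quiver) (v : vertex Q)
  (X : drep K (quiver_inf v)) : drep K Q :=
  @DRep K Q (fun i => rdim X (Some i))
    (fun a => rA X (Some a)) (fun a => rS X (Some a)).

Definition forget_hom (K : fieldType) (Q : quiver) (v : vertex Q)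
  (X Y : drep K (quiver_inf v))
  (f : forall o, 'M[K]_(rdim X o, rdim Y o))
  : forall i, 'M[K]_(rdim (forget X) i, rdim (forget Y) i) :=
  fun i => f (Some i).

(* Main.v *)
Require Import Defs.
From HB Require Import structures.
From mathcomp Require Import all_boot all_order all_algebra zify.
Import GRing.Theory.
Local Open Scope ring_scope.

Lemma sum_option (R : nmodType) (T : finType) (F : option T -> R) :
  \sum_(o : option T) F o = F None + \sum_(i : T) F (Some i).
Proof.
rewrite (bigD1 None) //=; congr (_ + _).
rewrite (reindex_omap Some id) /=; last by case.
by apply: eq_bigl => j; rewrite eqxx.
Qed.

Lemma mx_at_id (K : fieldType) (V : eqType) (d : V -> nat) (i : V)
  (m : 'M[K]_(d i)) : @mx_at K V d i i m = m.
Proof. by rewrite /mx_at; case: eqP => // e; rewrite castmx_id. Qed.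

Lemma mx_at_neq (K : fieldType) (V : eqType) (d : V -> nat) (i j : V)
  (m : 'M[K]_(d j)) : j != i -> @mx_at K V d i j m = 0.
Proof. by move=> ne; rewrite /mx_at; case: eqP => // e; rewrite e eqxx in ne. Qed.

Lemma mx_at_Some (K : fieldType) (T : finType) (d : option T -> nat) (i j : T)
  (m : 'M[K]_(d (Some j))) :
  @mx_at K _ d (Some i) (Some j) m = @mx_at K _ (fun k => d (Some k)) i j m.
Proof.
case: (eqVneq j i) => [e|ne].
  by subst j; rewrite !mx_at_id.
by rewrite !mx_at_neq.
Qed.

Lemma sum_tr_mx_at (K : fieldType) (V : finType) (d : V -> nat) (j : V)
  (m : 'M[K]_(d j)) : \sum_(i : V) \tr (@mx_at K V d i j m) = \tr m.
Proof.
rewrite (bigD1 j) //= mx_at_id big1 ?addr0 // => i ne.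
by rewrite mx_at_neq 1?eq_sym // mxtrace0.
Qed.

Lemma trN (K : fieldType) n (A : 'M[K]_n) : \tr (- A) = - \tr A.
Proof. by rewrite /mxtrace -sumrN; apply: eq_bigr => i _; rewrite mxE. Qed.

Lemma trB (K : fieldType) n (A B : 'M[K]_n) : \tr (A - B) = \tr A - \tr B.
Proof. by rewrite mxtraceD trN. Qed.

Lemma tr_sum (K : fieldType) n (I : finType) (F : I -> 'M[K]_n) :
  \tr (\sum_i F i) = \sum_i \tr (F i).
Proof.
rewrite /mxtrace (exchange_big_dep xpredT) //=; apply: eq_bigr => i _.
by rewrite summxE.
Qed.

Lemma sum_tr_Xc (K : fieldType) (Q : quiver) (lam : vertex Q -> K) (X : drep K Q) :
  \sum_(i : vertex Q) \tr (Xc lam X i) = - lam_dot lam X.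
Proof.
rewrite /Xc /lam_dot.
under eq_bigr do rewrite !trB !tr_sum mxtrace_scalar -mulr_natr.
rewrite !sumrB [X in X - _ - _]exchange_big [X in _ - X - _]exchange_big /=.
under eq_bigr do rewrite sum_tr_mx_at.
under [X in _ - X - _]eq_bigr do rewrite sum_tr_mx_at.
under eq_bigr do rewrite mxtrace_mulC.
by rewrite subrr sub0r.
Qed.

Lemma Xc_hom (K : fieldType) (Q : quiver) (lam : vertex Q -> K) (X Y : drep K Q)
  (h : forall i, 'M[K]_(rdim X i, rdim Y i)) :
  is_hom h -> forall i, Xc lam X i *m h i = h i *m Xc lam Y i.
Proof.
move=> hh i; rewrite /Xc !mulmxBl !mulmxBr !mulmx_suml !mulmx_sumr.
rewrite mul_scalar_mx mul_mx_scalar.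
congr (_ - _ - _); apply: eq_bigr => a _.
- case: (eqVneq (qhead a) i) => [e|ne]; last by rewrite !mx_at_neq // mul0mx mulmx0.
  subst i; rewrite !mx_at_id; case: (hh a) => h1 h2.
  by rewrite -mulmxA h1 mulmxA h2 -mulmxA.
- case: (eqVneq (qtail a) i) => [e|ne]; last by rewrite !mx_at_neq // mul0mx mulmx0.
  subst i; rewrite !mx_at_id; case: (hh a) => h1 h2.
  by rewrite -mulmxA h2 mulmxA h1 -mulmxA.
Qed.


Lemma Xc_None (K : fieldType) (Q : quiver) (v : vertex Q) (lam : vertex Q -> K)
  (X : drep K (quiver_inf v)) :
  @Xc K (quiver_inf v) (lam_inf lam) X None = - (rA X None *m rS X None).
Proof.
rewrite /Xc !(@sum_option _ (arrow Q)) /=.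
rewrite mx_at_neq // big1 ?addr0 => [|a _]; last by rewrite mx_at_neq.
rewrite mx_at_id big1 ?addr0 => [|a _]; last by rewrite mx_at_neq.
by rewrite raddf0 subr0 sub0r.
Qed.

Lemma Xc_Some (K : fieldType) (Q : quiver) (v : vertex Q) (lam : vertex Q -> K)
  (X : drep K (quiver_inf v)) (i : vertex Q) :
  @Xc K (quiver_inf v) (lam_inf lam) X (Some i) =
  Xc lam (forget X) i
  + @mx_at K _ (fun k => rdim X (Some k)) i v (rS X None *m rA X None).
Proof.
rewrite /Xc !(@sum_option _ (arrow Q)) /=.
rewrite [Z in _ - (Z + _) - _]mx_at_neq // add0r !mx_at_Some.
under eq_bigr do rewrite mx_at_Some.
under [Z in _ - Z - _]eq_bigr do rewrite mx_at_Some.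
by rewrite [RHS]addrC !addrA.
Qed.


Lemma flat_eq (K : fieldType) m n (A B : 'M[K]_(m, n)) : m = 0%N -> A = B.
Proof. by move=> e; move: A B; rewrite e => A B; rewrite !flatmx0. Qed.

Lemma thin_eq (K : fieldType) m n (A B : 'M[K]_(m, n)) : n = 0%N -> A = B.
Proof. by move=> e; move: A B; rewrite e => A B; rewrite !thinmx0. Qed.

Lemma inner0 (K : fieldType) m k p (A : 'M[K]_(m, k)) (B : 'M[K]_(k, p)) :
  k = 0%N -> A *m B = 0.
Proof. by move=> e; rewrite (@thin_eq K m k A 0) ?mul0mx. Qed.

Lemma C1_rowfree (K : fieldType) (Q : quiver) (v : vertex Q) (lam : vertex Q -> K)
  (X : drep K (quiver_inf v)) : in_C1 lam X -> row_free (rA X None).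
Proof.
case=> _ _ HS Hd; apply/negPn/negP => nf.
have lt : (\rank (rA X None) < rdim X None)%N.
  by rewrite ltn_neqAle nf rank_leq_row.
have d1 : rdim X None = 1%N by apply/eqP; rewrite eqn_leq Hd (leq_ltn_trans _ lt).
have A0 : rA X None = 0.
  by apply/eqP; rewrite -mxrank_eq0 -leqn0 -ltnS -d1.
pose f : forall o : vertex (quiver_inf v), 'M[K]_(rdim (S_inf K v) o, rdim X o) :=
  fun o => match o as o0 return 'M[K]_(rdim (S_inf K v) o0, rdim X o0) with
  | None => const_mx 1 | Some i => 0 end.
have hf : is_hom f.
  case=> [a|] /=; split.
  - by apply: flat_eq.
  - by apply: flat_eq.
  - by rewrite inner0 // A0 mulmx0.
  - by apply: flat_eq.
have := HS f hf None; rewrite /f.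
move/matrixP/(_ ord0 (Ordinal (leq_trans (ltn0Sn _) lt))); rewrite !mxE.
by apply/eqP; apply: oner_neq0.
Qed.

Lemma C1_colfree (K : fieldType) (Q : quiver) (v : vertex Q) (lam : vertex Q -> K)
  (X : drep K (quiver_inf v)) : in_C1 lam X -> row_free (rS X None)^T.
Proof.
case=> _ HS _ Hd; apply/negPn/negP => nf.
have lt : (\rank (rS X None)^T < rdim X None)%N.
  by rewrite ltn_neqAle nf rank_leq_row.
have d1 : rdim X None = 1%N by apply/eqP; rewrite eqn_leq Hd (leq_ltn_trans _ lt).
have S0 : rS X None = 0.
  by apply/eqP; rewrite -mxrank_eq0 -mxrank_tr -leqn0 -ltnS -d1.
pose f : forall o : vertex (quiver_inf v), 'M[K]_(rdim X o, rdim (S_inf K v) o) :=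
  fun o => match o as o0 return 'M[K]_(rdim X o0, rdim (S_inf K v) o0) with
  | None => const_mx 1 | Some i => 0 end.
have hf : is_hom f.
  case=> [a|] /=; split.
  - by apply: thin_eq.
  - by apply: thin_eq.
  - by apply: thin_eq.
  - by rewrite S0 mul0mx inner0.
have := HS f hf None; rewrite /f.
move/matrixP/(_ (Ordinal (leq_trans (ltn0Sn _) lt)) ord0); rewrite !mxE.
by apply/eqP; apply: oner_neq0.
Qed.


Lemma module_lam_dot (K : fieldType) (Q : quiver) (lam : vertex Q -> K) (X : drep K Q) :
  is_module lam X -> lam_dot lam X = 0.
Proof.
move=> hm; apply/eqP; rewrite -oppr_eq0 -sum_tr_Xc; apply/eqP.
by apply: big1 => i _; rewrite hm mxtrace0.
Qed.

Lemma Xc_forget_v (K : fieldType) (Q : quiver) (v : vertex Q) (lam : vertex Q -> K)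
  (X : drep K (quiver_inf v)) : @is_module K (quiver_inf v) (lam_inf lam) X ->
  Xc lam (forget X) v = - (rS X None *m rA X None).
Proof.
move=> hm; have := hm (Some v); rewrite Xc_Some mx_at_id => /eqP.
by rewrite addr_eq0 => /eqP.
Qed.

Lemma partA (K : fieldType) (Q : quiver) (v : vertex Q) (lam : vertex Q -> K)
  (X : drep K (quiver_inf v)) : in_C1 lam X -> nearly_rep lam v (forget X).
Proof.
move=> hC; have [hm _ _ Hd] := hC; split.
- have := @module_lam_dot _ _ _ _ hm; rewrite /lam_dot (@sum_option _ (vertex Q)) /=.
  by rewrite mul0r add0r.
- move=> i ne; have := hm (Some i); rewrite Xc_Some mx_at_neq ?addr0 //.
  by rewrite eq_sym.
- rewrite Xc_forget_v // mxrank_opp (leq_trans (mxrankM_maxl _ _)) //.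
  exact: leq_trans (rank_leq_col _) Hd.
Qed.

Lemma partB (K : fieldType) (Q : quiver) (v : vertex Q) (lam : vertex Q -> K)
  (X Y : drep K (quiver_inf v)) (f g : forall o, 'M[K]_(rdim X o, rdim Y o)) :
  in_C1 lam X -> in_C1 lam Y -> is_hom f -> is_hom g ->
  (forall i, forget_hom f i = forget_hom g i) -> forall o, f o = g o.
Proof.
move=> _ hY hf hg e [i|]; first exact: e.
have := @C1_rowfree _ _ _ _ _ hY => fr.
case: (hf None) => /= h1 _; case: (hg None) => /= h2 _.
apply/eqP; rewrite -subr_eq0 -(mulmx_free_eq0 _ fr) mulmxBl -h1 -h2.
by have := e v; rewrite /forget_hom => ->; rewrite subrr.
Qed.


Lemma partC (K : fieldType) (Q : quiver) (v : vertex Q) (lam : vertex Q -> K)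
  (X Y : drep K (quiver_inf v))
  (h : forall i, 'M[K]_(rdim (forget X) i, rdim (forget Y) i)) :
  in_C1 lam X -> in_C1 lam Y -> is_hom h ->
  exists f : forall o, 'M[K]_(rdim X o, rdim Y o),
    is_hom f /\ forall i, forget_hom f i = h i.
Proof.
move=> hX hY hh.
have frA := @C1_rowfree _ _ _ _ _ hY.
have frS := @C1_colfree _ _ _ _ _ hX.
have [hmX _ _ _] := hX; have [hmY _ _ _] := hY.
have E : rS X None *m rA X None *m h v = h v *m rS Y None *m rA Y None.
  have := @Xc_hom _ _ lam _ _ _ hh v.
  rewrite (@Xc_forget_v _ _ _ _ X hmX) (@Xc_forget_v _ _ _ _ Y hmY).
  by rewrite mulNmx mulmxN mulmxA => /oppr_inj.
pose L := (pinvmx (rS X None)^T)^T.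
have LS : L *m rS X None = 1%:M.
  by rewrite /L -[rS X None]trmxK -trmx_mul trmxK (mulmxVp frS) trmx1.
clearbody L.
pose R := pinvmx (rA Y None).
have AR : rA Y None *m R = 1%:M by rewrite /R (mulmxVp frA).
clearbody R.
pose c := L *m (h v *m rS Y None).
have C1 : rA X None *m h v = c *m rA Y None.
  by rewrite /c -mulmxA -E !mulmxA LS mul1mx.
have C2 : rS X None *m c = h v *m rS Y None.
  clearbody c.
  rewrite -[RHS]mulmx1 -AR !mulmxA -E -(mulmxA (rS X None)) C1.
  by rewrite !mulmxA -(mulmxA _ _ R) AR mulmx1.
pose f : forall o : vertex (quiver_inf v), 'M[K]_(rdim X o, rdim Y o) :=
  fun o => match o as o0 return 'M[K]_(rdim X o0, rdim Y o0) with
  | None => c | Some i => h i end.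
exists f; split => //.
case=> [a|] /=; first exact: hh a.
by split.
Qed.


Lemma small_tr0 (K : fieldType) n (B : 'M[K]_n) : (n <= 1)%N -> \tr B = 0 -> B = 0.
Proof.
move=> hn ht.
have eq : forall i j : 'I_n, i = j.
  move=> i j; apply: ord_inj; have hi := ltn_ord i; have hj := ltn_ord j; lia.
apply/matrixP => i j; rewrite -(eq i j) [RHS]mxE.
move: ht; rewrite /mxtrace (bigD1 i) //= big1 ?addr0 // => k ne.
by rewrite (eq k i) eqxx in ne.
Qed.

Lemma tr_Xc_v (K : fieldType) (Q : quiver) (lam : vertex Q -> K) (v : vertex Q)
  (N : drep K Q) : nearly_rep lam v N -> \tr (Xc lam N v) = 0.
Proof.
case=> hd hne _.
have := @sum_tr_Xc _ _ lam N; rewrite hd oppr0 (bigD1 v) //= big1 ?addr0 // => i ne.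
by rewrite hne // mxtrace0.
Qed.

Lemma partD (K : fieldType) (Q : quiver) (v : vertex Q) (lam : vertex Q -> K)
  (N : drep K Q) : nearly_rep lam v N ->
  exists X : drep K (quiver_inf v), in_C1 lam X /\ is_iso (forget X) N.
Proof.
move=> hN; have [hd hne hr] := hN.
set M := Xc lam N v.
pose rd : vertex (quiver_inf v) -> nat :=
  fun o => match o with None => \rank M | Some i => rdim N i end.
pose rAf : forall a : arrow (quiver_inf v),
    'M[K]_(rd (@qtail (quiver_inf v) a), rd (@qhead (quiver_inf v) a)) :=
  fun a => match a as a0 return
    'M[K]_(rd (@qtail (quiver_inf v) a0), rd (@qhead (quiver_inf v) a0)) with
  | None => row_base M | Some a => rA N a end.
pose rSf : forall a : arrow (quiver_inf v),
    'M[K]_(rd (@qhead (quiver_inf v) a), rd (@qtail (quiver_inf v) a)) :=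
  fun a => match a as a0 return
    'M[K]_(rd (@qhead (quiver_inf v) a0), rd (@qtail (quiver_inf v) a0)) with
  | None => - col_base M | Some a => rS N a end.
pose X := @DRep K (quiver_inf v) rd rAf rSf.
have eqF : forall i, Xc lam (forget X) i = Xc lam N i by [].
exists X; split; last first.
  pose f : forall i, 'M[K]_(rdim (forget X) i, rdim N i) := fun i => 1%:M.
  pose g : forall i, 'M[K]_(rdim N i, rdim (forget X) i) := fun i => 1%:M.
  exists f, g; split => //.
  - by move=> a; rewrite /f !mulmx1 !mul1mx.
  - by move=> a; rewrite /g !mulmx1 !mul1mx.
  - by move=> i; rewrite /f /g mulmx1.
  - by move=> i; rewrite /f /g mulmx1.
split.
- case=> [i|].
  + rewrite Xc_Some eqF /= mulNmx mulmx_base.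
    case: (eqVneq i v) => [e|ne].
      by subst i; rewrite mx_at_id subrr.
    by rewrite mx_at_neq 1?eq_sym // addr0 hne.
  + rewrite Xc_None /= mulmxN opprK; apply: small_tr0 => //.
    by rewrite mxtrace_mulC mulmx_base tr_Xc_v.
- move=> f hf o; case: o => [i|].
    by apply: thin_eq.
  case: (hf None) => _ /=.
  rewrite (@inner0 _ _ _ _ (f (Some v))) // mulNmx => /eqP; rewrite oppr_eq0.
  rewrite -trmx_eq0 trmx_mul mulmx_free_eq0 ?trmx_eq0 => [/eqP //|].
  by rewrite /row_free mxrank_tr; apply: col_base_full.
- move=> f hf o; case: o => [i|].
    by apply: flat_eq.
  case: (hf None) => /=.
  rewrite (@inner0 _ _ _ _ (rA (S_inf K v) None)) // => /esym/eqP.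
  by move=> e _; apply/eqP; rewrite -(mulmx_free_eq0 _ (row_base_free M)).
- by rewrite /= /rd.
Qed.

Theorem lemma3p2 (K : closedFieldType) (Q : quiver) (v : vertex Q)
  (lam : vertex Q -> K) :
  [/\ (forall X : drep K (quiver_inf v),
         in_C1 lam X -> nearly_rep lam v (forget X)),
      (forall (X Y : drep K (quiver_inf v)) (f g : forall o, 'M[K]_(rdim X o, rdim Y o)),
         in_C1 lam X -> in_C1 lam Y -> is_hom f -> is_hom g ->
         (forall i, forget_hom f i = forget_hom g i) -> forall o, f o = g o),
      (forall (X Y : drep K (quiver_inf v))
              (h : forall i, 'M[K]_(rdim (forget X) i, rdim (forget Y) i)),
         in_C1 lam X -> in_C1 lam Y -> is_hom h ->
         exists f : forall o, 'M[K]_(rdim X o, rdim Y o),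
           is_hom f /\ forall i, forget_hom f i = h i) &
      (forall N : drep K Q, nearly_rep lam v N ->
         exists X : drep K (quiver_inf v), in_C1 lam X /\ is_iso (forget X) N)].
Proof.
split.
- exact: partA.
- exact: partB.
- exact: partC.
- exact: partD.
Qed.
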